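(* Assume $abcd\neq0$. Let $(\omega_M)_{M\ge1}$ be points of $B_{out}$, let $\theta_M>0$ be defined by $\cosh\theta_M=|x(\omega_M)|$, and suppose $M\theta_M\to\theta_*\in(0,\infty)$ as $M\to\infty$. Then \[\lim_{M\to\infty}\frac{\mathcal{E}_M(\omega_M)}{M}=\frac{1}{\sinh^2\theta_*}\left(\frac{\sinh2\theta_*}{2\theta_*}-1\right).\]
   Context: Setting: $C=\begin{bmatrix} a&b\\ c&d\end{bmatrix}$ a fixed $2\times2$ unitary matrix, $\Delta=\det C$, a fixed square root $\Delta^{1/2}$; for each $M\ge1$, $\Gamma_M=\{0,\dots,M-1\}$ and $E_M$ is the linear map on $\ell^2(\Gamma_M;\mathbb{C}^2)$ with $(E_M\varphi)(x)=P\varphi(x+1)+Q\varphi(x-1)$, $\varphi(-1)=\varphi(M)=0$, $P=\begin{bmatrix} a&b\\0&0\end{bmatrix}$, $Q=\begin{bmatrix}0&0\\c&d\end{bmatrix}$. For $\omega$ on the unit circle let $z=\Delta^{1/2}\omega$ and let $\varphi$ be the unique solution of $(z-E_M)\varphi=\delta_0|R\rangle$, $|R\rangle=(0,1)^\top$; the energy is $\mathcal{E}_M(\omega)=\sum_{n=0}^{M-1}\|\varphi(n)\|^2_{\mathbb{C}^2}$. Let $x(\omega)=\frac{\omega+\omega^{-1}}{2|a|}$ and $B_{out}=\{\omega:|\omega|=1,\ |x(\omega)|>1\}$. *)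

(* Defs.v *)
From Stdlib Require Import Reals ZArith.
From Coquelicot Require Import Coquelicot.
Open Scope C_scope.

Definition vec2 := (Complex.C * Complex.C)%type.
Definition vzero : vec2 := (RtoC 0, RtoC 0).
Definition vadd (u v : vec2) : vec2 := (fst u + fst v, snd u + snd v).
Definition vscal (s : Complex.C) (u : vec2) : vec2 := (s * fst u, s * snd u).
Definition vsub (u v : vec2) : vec2 := (fst u - fst v, snd u - snd v).
Definition vnormsq (u : vec2) : R := (Cmod (fst u) ^ 2 + Cmod (snd u) ^ 2)%R.

(* C = [[a, b], [c, d]] is unitary: C^* C = I (written out entrywise) *)
Definition unitary2 (a b c d : Complex.C) : Prop :=
  (Cmod a ^ 2 + Cmod c ^ 2 = 1)%R /\ (Cmod b ^ 2 + Cmod d ^ 2 = 1)%R /\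
  Cconj a * b + Cconj c * d = RtoC 0.

(* P = [[a, b], [0, 0]],  Q = [[0, 0], [c, d]] *)
Definition Pmul (a b : Complex.C) (u : vec2) : vec2 := (a * fst u + b * snd u, RtoC 0).
Definition Qmul (c d : Complex.C) (u : vec2) : vec2 := (RtoC 0, c * fst u + d * snd u).

(* extension by zero of phi restricted to Gamma_M = {0,...,M-1}:
   phi(-1) = phi(M) = 0 *)
Definition ext (M : nat) (phi : nat -> vec2) (k : Z) : vec2 :=
  if (Z.leb 0 k && Z.ltb k (Z.of_nat M))%bool then phi (Z.to_nat k) else vzero.

Definition EM (a b c d : Complex.C) (M : nat) (phi : nat -> vec2) (x : nat) : vec2 :=
  vadd (Pmul a b (ext M phi (Z.of_nat x + 1)%Z)) (Qmul c d (ext M phi (Z.of_nat x - 1)%Z)).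

(* delta_0 |R>, |R> = (0,1) *)
Definition src (x : nat) : vec2 :=
  if Nat.eqb x 0 then (RtoC 0, RtoC 1) else vzero.

Definition solves (a b c d z : Complex.C) (M : nat) (phi : nat -> vec2) : Prop :=
  forall x : nat, (x < M)%nat -> vsub (vscal z (phi x)) (EM a b c d M phi x) = src x.

Fixpoint energy (M : nat) (phi : nat -> vec2) : R :=
  match M with
  | O => 0%R
  | S m => (energy m phi + vnormsq (phi m))%R
  end.

Definition xfun (a omega : Complex.C) : Complex.C :=
  (omega + / omega) / RtoC (2 * Cmod a).

Definition in_Bout (a omega : Complex.C) : Prop :=
  Cmod omega = 1%R /\ (Cmod (xfun a omega) > 1)%R.

(* Main.v *)
Require Import Defs.
From Stdlib Require Import Reals Lra Lia ZArith.
From Coquelicot Require Import Coquelicot.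
Open Scope R_scope.

Fixpoint rsum (f : nat -> R) (n : nat) : R :=
  match n with O => 0 | S m => rsum f m + f m end.

Lemma exp_pow_INR n y : exp y ^ n = exp (INR n * y).
Proof.
induction n.
- simpl. rewrite Rmult_0_l, exp_0. reflexivity.
- rewrite S_INR, <- tech_pow_Rmult, IHn, <- exp_plus. f_equal. ring.
Qed.

Lemma geo r M : r <> 1 -> rsum (fun k => r ^ k) M = (r ^ M - 1) / (r - 1).
Proof.
intro Hr. assert (r - 1 <> 0) by lra.
induction M.
- simpl. field. auto.
- simpl rsum. rewrite IHM. simpl. field. auto.
Qed.

Lemma lim_inv_n : is_lim_seq (fun n => / INR n) 0.
Proof.
  pose proof (is_lim_seq_inv INR p_infty is_lim_seq_INR) as H.
  simpl in H. apply H. discriminate.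
Qed.

Lemma lim_expm1 (y : nat -> R) :
  is_lim_seq y 0 -> (forall n, (1 <= n)%nat -> y n <> 0) ->
  is_lim_seq (fun n => (exp (y n) - 1) / y n) 1.
Proof.
intros Hy Hnz. apply is_lim_seq_spec. intro eps.
destruct (derivable_pt_lim_exp_0 eps (cond_pos eps)) as [del Hdel].
apply is_lim_seq_spec in Hy. destruct (Hy del) as [N HN].
exists (S N). intros n Hn.
assert (Hyn : y n <> 0) by (apply Hnz; lia).
specialize (HN n ltac:(lia)). rewrite Rminus_0_r in HN.
specialize (Hdel (y n) Hyn HN).
rewrite Rplus_0_l, exp_0 in Hdel. exact Hdel.
Qed.

Lemma cont_exp x : continuity_pt exp x.
Proof. apply derivable_continuous_pt, derivable_pt_exp. Qed.

Lemma lim_h0 (h : nat -> R) (t : R) :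
  is_lim_seq (fun n => INR n * h n) t -> is_lim_seq h 0.
Proof.
intro H.
apply is_lim_seq_ext_loc with (fun n => (INR n * h n) * / INR n).
- exists 1%nat. intros n Hn. field. apply not_0_INR. lia.
- replace 0 with (t * 0) by ring. apply is_lim_seq_mult'; auto. apply lim_inv_n.
Qed.

Lemma lim_geo_avg (h : nat -> R) (tau : R) :
  tau <> 0 -> (forall n, (1 <= n)%nat -> h n <> 0) ->
  is_lim_seq (fun n => INR n * h n) tau ->
  is_lim_seq (fun n => rsum (fun k => exp (h n) ^ k) n / INR n) ((exp tau - 1) / tau).
Proof.
intros Ht Hnz Hlim.
apply is_lim_seq_ext_loc with
  (fun n => (exp (INR n * h n) - 1) / ((INR n * h n) * ((exp (h n) - 1) / h n))).
- exists 1%nat. intros n Hn. rewrite geo.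
  + rewrite exp_pow_INR.
    assert (INR n <> 0) by (apply not_0_INR; lia).
    assert (h n <> 0) by (apply Hnz; lia).
    assert (exp (h n) - 1 <> 0).
    { intro E. assert (exp (h n) = exp 0) by (rewrite exp_0; lra).
      apply exp_inv in H1. auto. }
    field. auto.
  + intro E. assert (exp (h n) = exp 0) by (rewrite exp_0; lra).
    apply exp_inv in H. apply (Hnz n); auto; lia.
- replace ((exp tau - 1) / tau) with ((exp tau - 1) / (tau * 1)) by (field; auto).
  apply is_lim_seq_div'.
  + apply is_lim_seq_minus'. 2: apply is_lim_seq_const.
    apply (is_lim_seq_continuous exp). apply cont_exp. auto.
  + apply is_lim_seq_mult'; auto. apply lim_expm1.
    * eapply lim_h0; eauto.
    * auto.
  + lra.
Qed.

Definition Qf (k : nat) (q : R) : R := q ^ k - / q ^ k.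

Definition NQ (A q : R) (M : nat) : R :=
  rsum (fun k => Qf k q * Qf k q + Qf (S k) q * Qf (S k) q
                 - A ^ 2 * (q + / q) * (Qf k q * Qf (S k) q)) M.

Definition DQ (A q : R) (M : nat) : R :=
  Qf M q * Qf M q - A ^ 2 * (q + / q) * (Qf (M - 1) q * Qf M q)
  + A ^ 2 * (Qf (M - 1) q * Qf (M - 1) q).

Lemma Qf_sq k q : q <> 0 -> Qf k q * Qf k q = (q * q) ^ k + (/ q * / q) ^ k - 2.
Proof.
intro Hq. unfold Qf. rewrite !Rpow_mult_distr, !pow_inv.
assert (q ^ k <> 0) by (apply pow_nonzero; auto). field. auto.
Qed.

Lemma Qf_prod k q : q <> 0 ->
  Qf k q * Qf (S k) q = q * (q * q) ^ k + / q * (/ q * / q) ^ k - (q + / q).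
Proof.
intro Hq. unfold Qf. rewrite !Rpow_mult_distr, !pow_inv. simpl pow.
assert (q ^ k <> 0) by (apply pow_nonzero; auto). field. auto.
Qed.

Lemma NQ_closed A q M : q <> 0 ->
  NQ A q M = 2 * (rsum (fun k => (q * q) ^ k) M + rsum (fun k => (/ q * / q) ^ k) M - 2 * INR M)
    + Qf M q * Qf M q
    - A ^ 2 * (q + / q) * (q * rsum (fun k => (q * q) ^ k) M
                           + / q * rsum (fun k => (/ q * / q) ^ k) M - INR M * (q + / q)).
Proof.
intro Hq. induction M.
- unfold NQ. simpl. unfold Qf. simpl. field. auto.
- change (NQ A q (S M)) with (NQ A q M + (Qf M q * Qf M q + Qf (S M) q * Qf (S M) q
                 - A ^ 2 * (q + / q) * (Qf M q * Qf (S M) q))).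
  simpl rsum. rewrite IHM. rewrite S_INR.
  rewrite (Qf_sq (S M)), (Qf_sq M), (Qf_prod M) by auto.
  simpl pow. field. auto.
Qed.

Lemma Qf_pred n q : (1 <= n)%nat -> q <> 0 -> Qf (n - 1) q = q ^ n * / q - q * / q ^ n.
Proof.
intros Hn Hq. destruct n as [|m]; [lia|]. replace (S m - 1)%nat with m by lia.
unfold Qf. simpl. assert (q ^ m <> 0) by (apply pow_nonzero; auto). field. auto.
Qed.

Lemma final_limit (A t : R) (th : nat -> R) :
  0 < t -> A ^ 2 < 1 -> (forall n, (1 <= n)%nat -> 0 < th n) ->
  is_lim_seq (fun n => INR n * th n) t ->
  is_lim_seq (fun n => NQ A (exp (th n)) n / INR n / DQ A (exp (th n)) n)
    (/ (sinh t ^ 2) * (sinh (2 * t) / (2 * t) - 1)).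
Proof.
intros Ht HA Hth Hlim.
pose proof (lim_h0 th t Hlim) as Hth0.
assert (hq : is_lim_seq (fun n => exp (th n)) 1).
{ rewrite <- exp_0. apply (is_lim_seq_continuous exp). apply cont_exp. auto. }
assert (hqi : is_lim_seq (fun n => / exp (th n)) 1).
{ pose proof (is_lim_seq_inv _ _ hq) as H. simpl in H. rewrite Rinv_1 in H. apply H.
  intro E. injection E. lra. }
set (L1 := (exp (2 * t) - 1) / (2 * t)).
set (L2 := (exp (- (2 * t)) - 1) / (- (2 * t))).
assert (hg1 : is_lim_seq (fun n => rsum (fun k => (exp (th n) * exp (th n)) ^ k) n / INR n) L1).
{ apply is_lim_seq_ext with (fun n => rsum (fun k => exp (2 * th n) ^ k) n / INR n).
  - intro n. rewrite <- exp_plus. replace (th n + th n) with (2 * th n) by ring. reflexivity.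
  - apply (lim_geo_avg (fun n => 2 * th n)).
    + lra.
    + intros n Hn. specialize (Hth n Hn). lra.
    + apply is_lim_seq_ext with (fun n => 2 * (INR n * th n)). intro n; ring.
      pose proof (is_lim_seq_scal_l _ 2 _ Hlim) as H. simpl in H. exact H. }
assert (hg2 : is_lim_seq (fun n => rsum (fun k => (/ exp (th n) * / exp (th n)) ^ k) n / INR n) L2).
{ apply is_lim_seq_ext with (fun n => rsum (fun k => exp (- (2 * th n)) ^ k) n / INR n).
  - intro n. rewrite <- !exp_Ropp, <- exp_plus. replace (- th n + - th n) with (- (2 * th n)) by ring. reflexivity.
  - apply (lim_geo_avg (fun n => - (2 * th n))).
    + lra.
    + intros n Hn. specialize (Hth n Hn). lra.
    + apply is_lim_seq_ext with (fun n => (-2) * (INR n * th n)). intro n; ring.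
      pose proof (is_lim_seq_scal_l _ (-2) _ Hlim) as H. simpl in H.
      replace (- (2 * t)) with (-2 * t) by ring. exact H. }
assert (hE : is_lim_seq (fun n => exp (th n) ^ n) (exp t)).
{ apply is_lim_seq_ext with (fun n => exp (INR n * th n)).
  intro n. rewrite exp_pow_INR. reflexivity.
  apply (is_lim_seq_continuous exp). apply cont_exp. auto. }
assert (hEi : is_lim_seq (fun n => / exp (th n) ^ n) (/ exp t)).
{ pose proof (is_lim_seq_inv _ _ hE) as H. simpl in H. apply H.
  intro E. injection E. pose proof (exp_pos t). lra. }
pose proof lim_inv_n as hiv.
set (et := exp t). set (eti := / exp t).
set (LN := 2 * (L1 + L2 - 2) + (et - eti) * (et - eti) * 0
          - A ^ 2 * (1 + 1) * (1 * L1 + 1 * L2 - (1 + 1))).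
set (LD := (et - eti) * (et - eti) - A ^ 2 * (1 + 1) * ((et * 1 - 1 * eti) * (et - eti))
          + A ^ 2 * ((et * 1 - 1 * eti) * (et * 1 - 1 * eti))).
assert (Het : 1 < et).
{ unfold et. rewrite <- exp_0. apply exp_increasing. auto. }
assert (Hpos : 0 < et) by lra.
assert (HW : et - eti <> 0).
{ unfold eti. fold et. intro E.
  assert (et * et = 1). { replace (et * et) with (et * (et - / et) + 1) by (field; lra). rewrite E. ring. }
  nra. }
assert (HLD : LD <> 0).
{ unfold LD. replace ((et - eti) * (et - eti) - A ^ 2 * (1 + 1) * ((et * 1 - 1 * eti) * (et - eti)) +
   A ^ 2 * ((et * 1 - 1 * eti) * (et * 1 - 1 * eti))) with ((1 - A ^ 2) * ((et - eti) * (et - eti))) by ring.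
  apply Rmult_integral_contrapositive. split. lra. apply Rmult_integral_contrapositive; auto. }
replace (/ (sinh t ^ 2) * (sinh (2 * t) / (2 * t) - 1)) with (LN / LD).
2:{ unfold LN, LD, L1, L2, eti, et, sinh.
    replace (2 * t) with (t + t) by ring. replace (- (t + t)) with (- t + - t) by ring.
    rewrite !exp_plus, !exp_Ropp.
    fold et. fold et in HW. unfold eti in HW.
    assert (et - / et <> 0) by exact HW.
    assert (H1 : et * et - 1 > 0) by nra.
    field. repeat split; try lra.
    replace ((et * et - 1) * (et * et - 1) - A ^ 2 * 2 * ((et * et - 1) * (et * et - 1)) +
      A ^ 2 * ((et * et - 1) * (et * et - 1))) with ((1 - A ^ 2) * ((et * et - 1) * (et * et - 1))) by ring.
    assert (0 < (1 - A ^ 2) * ((et * et - 1) * (et * et - 1))).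
    { apply Rmult_lt_0_compat. lra. apply Rmult_lt_0_compat; lra. }
    lra. }
apply is_lim_seq_ext_loc with (fun n =>
  (2 * (rsum (fun k => (exp (th n) * exp (th n)) ^ k) n / INR n
        + rsum (fun k => (/ exp (th n) * / exp (th n)) ^ k) n / INR n - 2)
   + (exp (th n) ^ n - / exp (th n) ^ n) * (exp (th n) ^ n - / exp (th n) ^ n) * / INR n
   - A ^ 2 * (exp (th n) + / exp (th n)) *
       (exp (th n) * (rsum (fun k => (exp (th n) * exp (th n)) ^ k) n / INR n)
        + / exp (th n) * (rsum (fun k => (/ exp (th n) * / exp (th n)) ^ k) n / INR n)
        - (exp (th n) + / exp (th n))))
  /
  ((exp (th n) ^ n - / exp (th n) ^ n) * (exp (th n) ^ n - / exp (th n) ^ n)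
   - A ^ 2 * (exp (th n) + / exp (th n)) *
      ((exp (th n) ^ n * / exp (th n) - exp (th n) * / exp (th n) ^ n) * (exp (th n) ^ n - / exp (th n) ^ n))
   + A ^ 2 * ((exp (th n) ^ n * / exp (th n) - exp (th n) * / exp (th n) ^ n)
              * (exp (th n) ^ n * / exp (th n) - exp (th n) * / exp (th n) ^ n)))).
- exists 1%nat. intros n Hn.
  assert (Hq : exp (th n) <> 0) by (pose proof (exp_pos (th n)); lra).
  assert (INR n <> 0) by (apply not_0_INR; lia).
  symmetry. apply f_equal2.
  + rewrite NQ_closed by auto. unfold Qf. field. repeat split; auto. apply pow_nonzero; auto.
  + unfold DQ. rewrite Qf_pred by auto. unfold Qf. reflexivity.
- apply is_lim_seq_div'; [ | | exact HLD].
  + unfold LN.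
    repeat first [ assumption | apply is_lim_seq_minus' | apply is_lim_seq_plus' | apply is_lim_seq_mult'
                 | apply is_lim_seq_const ].
  + unfold LD.
    repeat first [ assumption | apply is_lim_seq_minus' | apply is_lim_seq_plus' | apply is_lim_seq_mult'
                 | apply is_lim_seq_const ].
Qed.

Open Scope C_scope.

Lemma stepU (a b s w A e C0 sk sk1 P: Complex.C) : a <> 0 -> b <> 0 -> s <> 0 -> w <> 0 -> A <> 0 ->
  e * e = 1 ->
  (e * a/(A*s)) * P * (e * (b*A/a) * (/w) * sk1) =
  (a * (P * (e * (b*A/a) * (/w) * sk)) + b * (P * (sk1 - e*A*(/w)*sk)))/(s*w).
Proof.
intros Ha Hb Hs Hw HA He. field_simplify_eq; auto.
replace (e ^ 2) with (e * e) by ring. rewrite He. ring.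
Qed.

Lemma stepV (a b s w A e C0 sk sk1 P: Complex.C) : a <> 0 -> b <> 0 -> s <> 0 -> w <> 0 -> A <> 0 ->
  e * e = 1 ->
  2 * A * C0 = e * (w + /w) ->
  (e * a/(A*s)) * P * ((2 * C0 * sk1 - sk) - e*A*(/w)*sk1) =
  ((s*w) * (P * (sk1 - e*A*(/w)*sk)) - (s*s*(A*A-1)/b) * ((e * a/(A*s)) * P * (e * (b*A/a) * (/w) * sk1)))/(s*s*(A*A)/a).
Proof.
intros Ha Hb Hs Hw HA He HC.
assert (H2 : (2:Complex.C) <> 0).
{ intro E. apply (f_equal fst) in E. simpl in E. lra. }
assert (C0 = e * (w + /w) / (2*A)). { rewrite <- HC. field. auto. }
rewrite H. field_simplify_eq.
- replace (e ^ 2) with (e * e) by ring. rewrite He. ring.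
- auto.
Qed.

Ltac cfix := match goal with |- ?x = ?y => change (@eq Complex.C x y) end.

Lemma ext_nat M phi n : ext M phi (Z.of_nat n) = if (n <? M)%nat then phi n else vzero.
Proof.
unfold ext.
assert (H1 : (0 <=? Z.of_nat n)%Z = true) by (apply Z.leb_le; lia).
rewrite H1. simpl.
destruct (Nat.ltb_spec n M).
- assert (H2 : (Z.of_nat n <? Z.of_nat M)%Z = true) by (apply Z.ltb_lt; lia).
  rewrite H2, Nat2Z.id. reflexivity.
- assert (H2 : (Z.of_nat n <? Z.of_nat M)%Z = false) by (apply Z.ltb_ge; lia).
  rewrite H2. reflexivity.
Qed.

Lemma ext_m1 M phi : ext M phi (-1)%Z = vzero.
Proof. reflexivity. Qed.

Lemma Ceq_from_sub (x y r : Complex.C) : x - y = r -> x = y + r.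
Proof. intro H. rewrite <- H. ring. Qed.

Lemma solves_fst a b c d z M phi x : solves a b c d z M phi -> (x < M)%nat ->
  z * fst (phi x) = a * fst (ext M phi (Z.of_nat (S x))) + b * snd (ext M phi (Z.of_nat (S x))).
Proof.
intros H Hx. specialize (H x Hx). apply (f_equal fst) in H.
unfold vsub, vscal, EM, vadd, Pmul, Qmul, src in H. simpl in H.
rewrite Nat2Z.inj_succ. unfold Z.succ.
apply Ceq_from_sub in H. rewrite H. destruct (x =? 0)%nat; simpl; ring.
Qed.

Lemma solves_snd_succ a b c d z M phi x : solves a b c d z M phi -> (S x < M)%nat ->
  z * snd (phi (S x)) = c * fst (phi x) + d * snd (phi x).
Proof.
intros H Hx. specialize (H (S x) Hx). unfold EM in H.
replace (Z.of_nat (S x) - 1)%Z with (Z.of_nat x) in H by lia.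
rewrite ext_nat in H. replace (x <? M)%nat with true in H by (symmetry; apply Nat.ltb_lt; lia).
apply (f_equal snd) in H.
unfold vsub, vscal, vadd, Pmul, Qmul, src in H. cbn [fst snd] in H.
apply Ceq_from_sub in H. rewrite H. simpl. ring.
Qed.

Lemma solves_snd0 a b c d z M phi : solves a b c d z M phi -> (0 < M)%nat ->
  z * snd (phi 0%nat) = 1.
Proof.
intros H Hx. specialize (H 0%nat Hx). apply (f_equal snd) in H.
unfold vsub, vscal, EM, vadd, Pmul, Qmul, src in H. simpl in H.
apply Ceq_from_sub in H. rewrite H. simpl. ring.
Qed.

Fixpoint sq (C0 : R) (k : nat) : R :=
  match k with
  | O => 0%R
  | S O => 1%R
  | S ((S m) as k') => (2 * C0 * sq C0 k' - sq C0 m)%R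
  end.

Definition rho (a s : Complex.C) (A e : R) : Complex.C := RtoC e * a / (RtoC A * s).

Definition Wb (a b s w : Complex.C) (A e C0 : R) (k : nat) : vec2 :=
  (Cpow (rho a s A e) k * (RtoC e * (b * RtoC A / a) * / w * RtoC (sq C0 k)),
   Cpow (rho a s A e) k * (RtoC (sq C0 (S k)) - RtoC e * RtoC A * / w * RtoC (sq C0 k))).

Lemma sol_shape (a b c d s w : Complex.C) (A e C0 : R) (M : nat) (phi : nat -> vec2) :
  a <> 0 -> b <> 0 -> s <> 0 -> w <> 0 -> A <> 0%R -> (e * e = 1)%R ->
  RtoC (2 * A * C0) = RtoC e * (w + / w) ->
  d = s * s * (RtoC A * RtoC A) / a -> c = s * s * (RtoC A * RtoC A - 1) / b ->
  solves a b c d (s * w) M phi -> (1 <= M)%nat ->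
  forall k, (k < M)%nat -> phi (M - 1 - k)%nat = vscal (snd (phi (M - 1)%nat)) (Wb a b s w A e C0 k).
Proof.
intros Ha Hb Hs Hw HA He HC Hd Hc Hsol HM.
assert (Hz : s * w <> 0) by (apply Cmult_neq_0; auto).
assert (HAc : RtoC A <> 0) by (intro E; apply HA; apply (f_equal fst) in E; exact E).
assert (Hec : RtoC e * RtoC e = 1) by (rewrite <- RtoC_mult, He; reflexivity).
set (V := snd (phi (M - 1)%nat)).
induction k as [|k IH]; intro Hk.
- replace (M - 1 - 0)%nat with (M - 1)%nat by lia.
  pose proof (solves_fst _ _ _ _ _ _ _ (M - 1)%nat Hsol ltac:(lia)) as H0.
  replace (S (M - 1)) with M in H0 by lia.
  rewrite ext_nat, Nat.ltb_irrefl in H0. simpl in H0.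
  assert (Hu : fst (phi (M - 1)%nat) = 0).
  { transitivity (/(s*w) * ((s*w) * fst (phi (M - 1)%nat))). field; auto. rewrite H0. ring. }
  unfold V. destruct (phi (M - 1)%nat) as [u v] eqn:E. cbn [fst snd] in Hu |- *. rewrite Hu.
  unfold vscal, Wb. cbn [fst snd sq Cpow]. f_equal; ring.
- set (n := (M - 1 - S k)%nat).
  specialize (IH ltac:(lia)).
  replace (M - 1 - k)%nat with (S n) in IH by (unfold n; lia).
  pose proof (solves_fst _ _ _ _ _ _ _ n Hsol ltac:(unfold n; lia)) as Hu.
  rewrite ext_nat in Hu. replace (S n <? M)%nat with true in Hu by (symmetry; apply Nat.ltb_lt; unfold n; lia).
  pose proof (solves_snd_succ _ _ _ _ _ _ _ n Hsol ltac:(unfold n; lia)) as Hv.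
  rewrite IH in Hu, Hv. fold V in Hu, Hv.
  unfold vscal, Wb in Hu, Hv |- *. cbn [fst snd] in Hu, Hv |- *.
  set (P := V * Cpow (rho a s A e) k).
  destruct (phi n) as [un vn] eqn:En. cbn [fst snd] in Hu, Hv |- *.
  set (sk := RtoC (sq C0 k)). set (sk1 := RtoC (sq C0 (S k))).
  assert (Hsk2 : RtoC (sq C0 (S (S k))) = 2 * RtoC C0 * sk1 - sk).
  { change (sq C0 (S (S k))) with (2 * C0 * sq C0 (S k) - sq C0 k)%R.
    unfold sk, sk1. rewrite RtoC_minus, !RtoC_mult. reflexivity. }
  rewrite Hsk2.
  assert (HC' : 2 * RtoC A * RtoC C0 = RtoC e * (w + / w)).
  { rewrite <- HC, !RtoC_mult. reflexivity. }
  assert (Hun : un = (a * (P * (RtoC e * (b * RtoC A / a) * / w * sk)) + b * (P * (sk1 - RtoC e * RtoC A * / w * sk))) / (s * w)).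
  { transitivity ((s * w * un) / (s * w)). { field. repeat split; auto. } rewrite Hu. unfold P, sk, sk1. apply (f_equal (fun x => x / (s * w))). ring. }
  assert (Hun2 : un = rho a s A e * P * (RtoC e * (b * RtoC A / a) * / w * sk1)).
  { rewrite Hun. unfold rho. rewrite <- stepU; auto. }
  assert (Hdnz : d <> 0).
  { assert (Hn : s * s * (RtoC A * RtoC A) <> 0) by (repeat apply Cmult_neq_0; auto).
    intro E. apply Hn. transitivity (d * a). rewrite Hd. field. auto. rewrite E. ring. }
  assert (Hdv : d * vn = s * w * (P * (sk1 - RtoC e * RtoC A * / w * sk)) - c * un).
  { apply (f_equal (fun x => x - c * un)) in Hv.
    transitivity (c * un + d * vn - c * un). ring. rewrite <- Hv. unfold P, sk, sk1. ring. }
  assert (Hvn : vn = ((s * w) * (P * (sk1 - RtoC e * RtoC A * / w * sk)) - c * un) / d).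
  { rewrite <- Hdv. field. auto. }
  rewrite Hvn, Hun2, Hc, Hd. unfold rho.
  rewrite <- (stepV a b s w A e C0 sk sk1 P); auto.
  simpl Cpow. unfold P, rho. f_equal; ring.
Qed.

Lemma Cmod2_comp (z : Complex.C) : (Cmod z ^ 2 = fst z ^ 2 + snd z ^ 2)%R.
Proof. unfold Cmod. rewrite pow2_sqrt. reflexivity. nra. Qed.

Lemma rsum_ext (f g : nat -> R) M : (forall k, (k < M)%nat -> f k = g k) -> rsum f M = rsum g M.
Proof. induction M; intro H; simpl; auto. rewrite IHM by (intros; apply H; lia). rewrite H by lia. reflexivity. Qed.

Lemma rsum_scal (c : R) f M : rsum (fun k => c * f k)%R M = (c * rsum f M)%R.
Proof. induction M; simpl. ring. rewrite IHM. ring. Qed.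

Lemma rsum_shift f M : rsum f (S M) = (f 0%nat + rsum (fun k => f (S k)) M)%R.
Proof. induction M. simpl. ring. change (rsum f (S (S M))) with (rsum f (S M) + f (S M))%R. rewrite IHM. simpl. ring. Qed.

Lemma rsum_rev f M : rsum (fun k => f (M - 1 - k)%nat) M = rsum f M.
Proof.
induction M. reflexivity.
rewrite rsum_shift. rewrite (rsum_ext _ (fun k => f (M - 1 - k)%nat)) by (intros; f_equal; lia).
rewrite IHM. replace (S M - 1 - 0)%nat with M by lia. simpl. ring.
Qed.

Lemma energy_rsum M phi : energy M phi = rsum (fun n => vnormsq (phi n)) M.
Proof. induction M; simpl; auto. rewrite IHM. reflexivity. Qed.

Lemma mod_lin (x y e A : R) (w : Complex.C) :
  (fst w ^ 2 + snd w ^ 2 = 1)%R ->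
  (Cmod (RtoC x - RtoC e * RtoC A * Cconj w * RtoC y) ^ 2
   = x ^ 2 - 2 * e * A * fst w * x * y + e ^ 2 * A ^ 2 * y ^ 2)%R.
Proof.
intro Hw. rewrite Cmod2_comp. destruct w as [wr wi]. simpl in *. nra.
Qed.

Lemma Rabs_e (e : R) : (e * e = 1)%R -> Rabs e = 1%R.
Proof. intro H. destruct (Rle_lt_dec 0 e). rewrite Rabs_pos_eq; nra. rewrite Rabs_left; nra. Qed.

Section Norms.
Variables (a b s w : Complex.C) (A e C0 : R).
Hypotheses (HAa : Cmod a = A) (HA : (0 < A)%R) (Hs1 : Cmod s = 1%R) (Hw1 : Cmod w = 1%R)
  (He : (e * e = 1)%R) (HeC : (e * fst w = A * C0)%R) (Hb2 : (Cmod b ^ 2 = 1 - A ^ 2)%R).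

Lemma a_nz : a <> 0.
Proof. intro E. rewrite E, Cmod_0 in HAa. lra. Qed.
Lemma s_nz : s <> 0.
Proof. intro E. rewrite E, Cmod_0 in Hs1. lra. Qed.
Lemma w_nz : w <> 0.
Proof. intro E. rewrite E, Cmod_0 in Hw1. lra. Qed.

Lemma inv_w : / w = Cconj w.
Proof.
pose proof (Cmod2_conj w) as H. rewrite Hw1 in H.
assert (Hw := w_nz).
transitivity (/ w * (w * Cconj w)).
- rewrite <- H. replace (1 ^ 2)%R with 1%R by ring. rewrite Cmult_1_r. reflexivity.
- field. auto.
Qed.

Lemma w_comp : (fst w ^ 2 + snd w ^ 2 = 1)%R.
Proof. rewrite <- Cmod2_comp, Hw1. ring. Qed.

Lemma Cmod_rho : Cmod (rho a s A e) = 1%R.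
Proof.
unfold rho. assert (HAc : RtoC A * s <> 0).
{ apply Cmult_neq_0. intro E. apply (f_equal fst) in E. simpl in E. lra. apply s_nz. }
rewrite Cmod_div by auto. rewrite !Cmod_mult, !Cmod_R, Rabs_e by auto.
rewrite HAa, Hs1, Rabs_pos_eq by lra. field. lra.
Qed.

Lemma snd_norm k : (Cmod (snd (Wb a b s w A e C0 k)) ^ 2
  = sq C0 (S k) ^ 2 - 2 * A ^ 2 * C0 * sq C0 k * sq C0 (S k) + A ^ 2 * sq C0 k ^ 2)%R.
Proof.
unfold Wb. cbn [snd]. rewrite Cmod_mult, Cmod_pow, Cmod_rho, pow1, Rmult_1_l.
rewrite inv_w, mod_lin by apply w_comp.
replace (2 * e * A * fst w)%R with (2 * A * (e * fst w))%R by ring. rewrite HeC.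
replace (e ^ 2)%R with (e * e)%R by ring. rewrite He. ring.
Qed.

Lemma fst_norm k : (Cmod (fst (Wb a b s w A e C0 k)) ^ 2 = (1 - A ^ 2) * sq C0 k ^ 2)%R.
Proof.
unfold Wb. cbn [fst]. rewrite Cmod_mult, Cmod_pow, Cmod_rho, pow1, Rmult_1_l.
rewrite !Cmod_mult, Cmod_inv by apply w_nz. rewrite Cmod_div by apply a_nz.
rewrite !Cmod_mult, !Cmod_R, Rabs_e by auto. rewrite HAa, Hw1, Rabs_pos_eq by lra.
rewrite <- Hb2, Rpow_mult_distr, pow2_abs. field. lra.
Qed.

End Norms.

Lemma vnormsq_scal V (W : vec2) : vnormsq (vscal V W) = (Cmod V ^ 2 * (Cmod (fst W) ^ 2 + Cmod (snd W) ^ 2))%R.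
Proof. unfold vnormsq, vscal. cbn [fst snd]. rewrite !Cmod_mult. ring. Qed.

Lemma energy_formula (a b c d s w : Complex.C) (A e C0 : R) (M : nat) (phi : nat -> vec2) :
  Cmod a = A -> (0 < A)%R -> Cmod s = 1%R -> Cmod w = 1%R -> (e * e = 1)%R ->
  (e * fst w = A * C0)%R -> (Cmod b ^ 2 = 1 - A ^ 2)%R -> b <> 0 ->
  RtoC (2 * A * C0) = RtoC e * (w + / w) ->
  d = s * s * (RtoC A * RtoC A) / a -> c = s * s * (RtoC A * RtoC A - 1) / b ->
  solves a b c d (s * w) M phi -> (1 <= M)%nat ->
  energy M phi =
   (rsum (fun k => sq C0 k ^ 2 + sq C0 (S k) ^ 2 - 2 * A ^ 2 * C0 * sq C0 k * sq C0 (S k)) M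
    / (sq C0 M ^ 2 - 2 * A ^ 2 * C0 * sq C0 (M - 1) * sq C0 M + A ^ 2 * sq C0 (M - 1) ^ 2))%R.
Proof.
intros HAa HA Hs1 Hw1 He HeC Hb2 Hb HC Hd Hc Hsol HM.
assert (Ha := a_nz a A HAa HA). assert (Hs := s_nz s Hs1). assert (Hw := w_nz w Hw1).
assert (HAn : A <> 0%R) by lra.
pose proof (sol_shape a b c d s w A e C0 M phi Ha Hb Hs Hw HAn He HC Hd Hc Hsol HM) as Hsh.
set (V := snd (phi (M - 1)%nat)) in Hsh.
set (g := fun k => (sq C0 k ^ 2 + sq C0 (S k) ^ 2 - 2 * A ^ 2 * C0 * sq C0 k * sq C0 (S k))%R).
set (DS := (sq C0 M ^ 2 - 2 * A ^ 2 * C0 * sq C0 (M - 1) * sq C0 M + A ^ 2 * sq C0 (M - 1) ^ 2)%R).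
assert (HE : energy M phi = (Cmod V ^ 2 * rsum g M)%R).
{ rewrite energy_rsum, <- rsum_rev, <- rsum_scal. apply rsum_ext. intros k Hk.
  rewrite Hsh by auto. rewrite vnormsq_scal.
  rewrite (fst_norm a b s w A e C0 HAa HA Hs1 Hw1 He Hb2), (snd_norm a b s w A e C0 HAa HA Hs1 Hw1 He HeC).
  unfold g. ring. }
assert (H0 := solves_snd0 _ _ _ _ _ _ _ Hsol ltac:(lia)).
replace 0%nat with (M - 1 - (M - 1))%nat in H0 by lia.
rewrite Hsh in H0 by lia. unfold vscal in H0. cbn [snd] in H0.
apply (f_equal (fun z => Cmod z ^ 2)%R) in H0.
rewrite !Cmod_mult, Cmod_1, Hs1, Hw1 in H0.
assert (HD : (Cmod V ^ 2 * DS = 1)%R).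
{ unfold DS. replace (sq C0 M) with (sq C0 (S (M - 1))) by (f_equal; lia).
  rewrite <- (snd_norm a b s w A e C0 HAa HA Hs1 Hw1 He HeC). transitivity ((1 * 1 * (Cmod V * Cmod (snd (Wb a b s w A e C0 (M - 1))))) ^ 2)%R. ring. rewrite H0. ring. }
assert (HDS : DS <> 0%R) by (intro E; rewrite E in HD; lra).
rewrite HE. fold DS. fold g.
replace (Cmod V ^ 2)%R with (/ DS)%R. field. auto.
apply (Rmult_eq_reg_r DS). rewrite HD. field. auto. auto.
Qed.

Lemma sq_Qf (q : R) k : q <> 0%R -> (q - / q <> 0)%R -> sq ((q + / q) / 2) k = (Qf k q / (q - / q))%R.
Proof.
intros Hq Hd.
assert (Hqq : (q * q - 1 <> 0)%R).
{ intro E. apply Hd. replace (q - / q)%R with ((q * q - 1) / q)%R by (field; auto). rewrite E. unfold Rdiv. ring. }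
assert (H : forall k, sq ((q + / q) / 2) k = (Qf k q / (q - / q))%R /\
                      sq ((q + / q) / 2) (S k) = (Qf (S k) q / (q - / q))%R).
{ intro j. induction j as [|k0 [IH1 IH2]].
  - split; simpl; unfold Qf; simpl; field; repeat split; auto.
  - split; auto. change (sq ((q + / q) / 2) (S (S k0))) with
      (2 * ((q + / q) / 2) * sq ((q + / q) / 2) (S k0) - sq ((q + / q) / 2) k0)%R.
    rewrite IH1, IH2. unfold Qf. simpl.
    assert (q ^ k0 <> 0)%R by (apply pow_nonzero; auto). field. repeat split; auto. }
apply H.
Qed.

Lemma ratio_conv (A q : R) M : q <> 0%R -> (q - / q <> 0)%R -> (1 <= M)%nat ->
  (rsum (fun k => sq ((q + / q) / 2) k ^ 2 + sq ((q + / q) / 2) (S k) ^ 2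
        - 2 * A ^ 2 * ((q + / q) / 2) * sq ((q + / q) / 2) k * sq ((q + / q) / 2) (S k)) M
    / (sq ((q + / q) / 2) M ^ 2 - 2 * A ^ 2 * ((q + / q) / 2) * sq ((q + / q) / 2) (M - 1) * sq ((q + / q) / 2) M
       + A ^ 2 * sq ((q + / q) / 2) (M - 1) ^ 2))%R
  = (NQ A q M / DQ A q M)%R.
Proof.
intros Hq Hd HM.
assert (Hqq : (q * q - 1 <> 0)%R).
{ intro E. apply Hd. replace (q - / q)%R with ((q * q - 1) / q)%R by (field; auto). rewrite E. unfold Rdiv. ring. }
set (K := (/ ((q - / q) * (q - / q)))%R).
assert (HK : K <> 0%R) by (unfold K; apply Rinv_neq_0_compat; apply Rmult_integral_contrapositive; auto).
assert (E1 : rsum (fun k => sq ((q + / q) / 2) k ^ 2 + sq ((q + / q) / 2) (S k) ^ 2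
        - 2 * A ^ 2 * ((q + / q) / 2) * sq ((q + / q) / 2) k * sq ((q + / q) / 2) (S k))%R M
        = (K * NQ A q M)%R).
{ unfold NQ. rewrite <- rsum_scal. apply rsum_ext. intros k _. rewrite !sq_Qf by auto.
  unfold K. field. repeat split; auto. }
assert (E2 : (sq ((q + / q) / 2) M ^ 2 - 2 * A ^ 2 * ((q + / q) / 2) * sq ((q + / q) / 2) (M - 1) * sq ((q + / q) / 2) M
       + A ^ 2 * sq ((q + / q) / 2) (M - 1) ^ 2)%R = (K * DQ A q M)%R).
{ unfold DQ. rewrite !sq_Qf by auto. unfold K. field. repeat split; auto. }
rewrite E1, E2.
destruct (Req_dec (DQ A q M) 0) as [Z|Z].
- rewrite Z, Rmult_0_r. unfold Rdiv. rewrite Rinv_0. ring.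
- field. repeat split; auto.
Qed.

Lemma prod4_nz (a b c d : Complex.C) : a * b * c * d <> 0 -> a <> 0 /\ b <> 0 /\ c <> 0 /\ d <> 0.
Proof.
intro H. repeat split; intro E; apply H; rewrite E; ring.
Qed.

Lemma conj_mul (z : Complex.C) : z * Cconj z = RtoC (Cmod z ^ 2).
Proof. rewrite Cmod2_conj. reflexivity. Qed.

Lemma unitary_facts (a b c d s : Complex.C) :
  unitary2 a b c d -> a * b * c * d <> 0 -> s * s = a * d - b * c ->
  (0 < Cmod a)%R /\ (Cmod a ^ 2 < 1)%R /\ Cmod s = 1%R /\ (Cmod b ^ 2 = 1 - Cmod a ^ 2)%R /\ b <> 0 /\
  d = s * s * (RtoC (Cmod a) * RtoC (Cmod a)) / a /\
  c = s * s * (RtoC (Cmod a) * RtoC (Cmod a) - 1) / b.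
Proof.
intros [H1 [H2 H3]] Hp Hs.
destruct (prod4_nz _ _ _ _ Hp) as [Ha [Hb [Hc Hd]]].
set (A := Cmod a).
assert (HA : (0 < A)%R) by (apply Cmod_gt_0; auto).
assert (HC : (0 < Cmod c)%R) by (apply Cmod_gt_0; auto).
assert (Hd1 : d = s * s * Cconj a).
{ assert (E : Cconj a * b = - (Cconj c * d)).
  { transitivity (Cconj a * b + Cconj c * d - Cconj c * d). ring. rewrite H3. ring. }
  transitivity (d * RtoC (Cmod a ^ 2 + Cmod c ^ 2)).
  { rewrite H1. ring. }
  rewrite RtoC_plus, <- !conj_mul, Hs.
  transitivity (d * (a * Cconj a) - c * (Cconj a * b)).
  rewrite E. ring. ring. }
assert (Hca : Cconj a = RtoC A * RtoC A / a).
{ transitivity (/ a * (a * Cconj a)). field. auto.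
  rewrite conj_mul. fold A. rewrite <- RtoC_mult. simpl pow. rewrite Rmult_1_r. field. auto. }
assert (Hd2 : d = s * s * (RtoC A * RtoC A) / a).
{ rewrite Hd1, Hca. field. auto. }
assert (Hc2 : c = s * s * (RtoC A * RtoC A - 1) / b).
{ transitivity ((b * c) / b). field. auto.
  f_equal. transitivity (a * d - s * s). rewrite Hs. ring. rewrite Hd2. field. auto. }
set (m := (Cmod s * Cmod s)%R).
assert (Hm0 : (0 <= m)%R) by (unfold m; apply Rmult_le_pos; apply Cmod_ge_0).
assert (HmodD : Cmod d = (m * A)%R).
{ rewrite Hd2. rewrite Cmod_div by auto. rewrite !Cmod_mult. rewrite Cmod_R. fold A.
  unfold m. rewrite Rabs_pos_eq by lra. field. lra. }
assert (HA1 : (A ^ 2 < 1)%R) by (unfold A; nra).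
assert (HmodBC : (Cmod b * Cmod c = m * (1 - A ^ 2))%R).
{ rewrite <- Cmod_mult. assert (E : b * c = s * s * RtoC (A * A - 1)).
  { rewrite Hc2, RtoC_minus, RtoC_mult. field. auto. }
  rewrite E, !Cmod_mult, Cmod_R. rewrite Rabs_left1 by nra. unfold m. ring. }
assert (Hm1 : m = 1%R).
{ assert (EB : (Cmod b ^ 2 = 1 - m ^ 2 * A ^ 2)%R) by (rewrite HmodD in H2; rewrite <- H2; ring).
  assert (EC : (Cmod c ^ 2 = 1 - A ^ 2)%R) by (unfold A in *; lra).
  assert (Hsq : ((1 - m ^ 2 * A ^ 2) * (1 - A ^ 2) = m ^ 2 * (1 - A ^ 2) ^ 2)%R).
  { transitivity (Cmod b ^ 2 * Cmod c ^ 2)%R. rewrite EB, EC; ring. transitivity ((Cmod b * Cmod c) ^ 2)%R. ring. rewrite HmodBC. ring. }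
  assert (Hm2 : (m ^ 2 = 1)%R).
  { apply (Rmult_eq_reg_r (1 - A ^ 2)). 2: nra.
    assert (((1 - m ^ 2 * A ^ 2) - m ^ 2 * (1 - A ^ 2)) * (1 - A ^ 2) = 0)%R by nra.
    nra. }
  nra. }
assert (Hs1 : Cmod s = 1%R).
{ unfold m in Hm1. pose proof (Cmod_ge_0 s). nra. }
repeat split; auto.
rewrite HmodD in H2. rewrite Hm1 in H2. fold A. lra.
Qed.

Lemma omega_facts (a w : Complex.C) (C0 : R) :
  Cmod w = 1%R -> (0 < Cmod a)%R -> C0 = Cmod (xfun a w) ->
  exists e : R, (e * e = 1)%R /\ (e * fst w = Cmod a * C0)%R /\
    RtoC (2 * Cmod a * C0) = RtoC e * (w + / w).
Proof.
intros Hw1 HA HC.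
assert (Hw : w <> 0) by (intro E; rewrite E, Cmod_0 in Hw1; lra).
assert (Hinv : / w = Cconj w).
{ pose proof (Cmod2_conj w) as H. rewrite Hw1 in H.
  transitivity (/ w * (w * Cconj w)).
  - rewrite <- H. replace (1 ^ 2)%R with 1%R by ring. rewrite Cmult_1_r. reflexivity.
  - field. auto. }
assert (Hsum : w + / w = RtoC (2 * fst w)).
{ rewrite Hinv. destruct w as [x y]. unfold Cconj, Cplus, RtoC. cbn [fst snd]. f_equal; ring. }
assert (HX : xfun a w = RtoC (fst w / Cmod a)).
{ unfold xfun. rewrite Hsum. rewrite <- RtoC_div by lra. f_equal. field. lra. }
rewrite HX, Cmod_R in HC.
exists (if Rle_dec 0 (fst w) then 1%R else (-1)%R).
destruct (Rle_dec 0 (fst w)) as [Hp|Hn].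
- rewrite Rabs_pos_eq in HC by (apply Rdiv_le_0_compat; lra).
  split. ring. split. rewrite HC. field. lra.
  rewrite Hsum, <- RtoC_mult. f_equal. rewrite HC. field. lra.
- rewrite Rabs_left in HC by (apply Rdiv_lt_0_compat_l || (unfold Rdiv; apply Rmult_neg_pos; [lra | apply Rinv_0_lt_compat; lra])).
  split. ring. split. rewrite HC. field. lra.
  rewrite Hsum, <- RtoC_mult. f_equal. rewrite HC. field. lra.
Qed.

Theorem mainTheorem10
  (a b c d sqrtDelta : Complex.C) (omega : nat -> Complex.C) (theta : nat -> R)
  (thetastar : R) (phi : nat -> nat -> vec2) :
  unitary2 a b c d ->
  (a * b * c * d <> RtoC 0)%C ->
  (sqrtDelta * sqrtDelta = a * d - b * c)%C ->
  (forall M : nat, (1 <= M)%nat -> in_Bout a (omega M)) ->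
  (forall M : nat, (1 <= M)%nat ->
     (0 < theta M)%R /\ cosh (theta M) = Cmod (xfun a (omega M))) ->
  (0 < thetastar)%R ->
  is_lim_seq (fun M => (INR M * theta M)%R) thetastar ->
  (forall M : nat, (1 <= M)%nat ->
     solves a b c d (sqrtDelta * omega M)%C M (phi M)) ->
  is_lim_seq (fun M => (energy M (phi M) / INR M)%R)
    (/ (sinh thetastar ^ 2) * (sinh (2 * thetastar) / (2 * thetastar) - 1))%R.
Proof.
intros Hu Hp Hs HB Hth Hts Hlim Hsol.
destruct (unitary_facts a b c d sqrtDelta Hu Hp Hs) as [HA [HA1 [Hs1 [Hb2 [Hb [Hd Hc]]]]]].
set (A := Cmod a) in *.
apply is_lim_seq_ext_loc with (fun M => (NQ A (exp (theta M)) M / INR M / DQ A (exp (theta M)) M)%R).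
2: { apply final_limit; auto. intros n Hn. apply Hth; auto. }
exists 1%nat. intros M HM.
destruct (HB M HM) as [Hw1 _].
destruct (Hth M HM) as [Hth0 Hcosh].
destruct (omega_facts a (omega M) (cosh (theta M)) Hw1 HA Hcosh) as [e [He [HeC HC]]].
rewrite (energy_formula a b c d sqrtDelta (omega M) A e (cosh (theta M)) M (phi M)); auto.
set (q := exp (theta M)).
assert (Hq1 : (1 < q)%R) by (unfold q; rewrite <- exp_0; apply exp_increasing; auto).
assert (Hcq : cosh (theta M) = ((q + / q) / 2)%R).
{ unfold cosh, q. rewrite exp_Ropp. reflexivity. }
rewrite Hcq.
rewrite ratio_conv.
- unfold Rdiv. ring.
- lra.
- intro E. assert (q * q = 1)%R.
  { replace (q * q)%R with (q * (q - / q) + 1)%R by (field; lra). rewrite E. ring. }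
  nra.
- auto.
Qed.
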